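(* Let $G$ be an arbitrary group and let $S=\bigoplus_{g\in G}S_g$ be an epsilon-strongly $G$-graded ring with principal component $R=S_e$. If $\mathrm{Supp}(S)$ is finite and $R$ is left (respectively right) artinian, then $S$ is left (respectively right) artinian.
   Context: All rings are associative with multiplicative identity $1\neq 0$. A ring $S$ is $G$-graded if $S=\bigoplus_{g\in G}S_g$ for additive subgroups $S_g$ with $S_gS_h\subseteq S_{gh}$ for all $g,h\in G$; $S_e$ is the principal component, and $\mathrm{Supp}(S)=\{g\in G:S_g\neq\{0\}\}$. $S$ is epsilon-strongly $G$-graded if (a) $S_gS_{g^{-1}}S_g=S_g$ for all $g\in G$, and (b) for each $g\in G$ the ideal $S_gS_{g^{-1}}$ of $S_e$ has a multiplicative identity. *)

(* Defs.v *)
From mathcomp Require Import all_boot all_algebra.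
From Stdlib Require List.
Set Implicit Arguments. Unset Strict Implicit. Unset Printing Implicit Defensive.
Import GRing.Theory.
Local Open Scope ring_scope.

Record is_group (G : Type) (mul : G -> G -> G) (e : G) (inv : G -> G) : Prop := {
  grp_assoc : forall a b c, mul a (mul b c) = mul (mul a b) c;
  grp_unitl : forall a, mul e a = a;
  grp_unitr : forall a, mul a e = a;
  grp_invl  : forall a, mul (inv a) a = e;
  grp_invr  : forall a, mul a (inv a) = e }.

Section Graded.
Variables (G : Type) (S : nzRingType).

Record is_graded (mul : G -> G -> G) (Sg : G -> S -> Prop) : Prop := {
  gr_zero : forall g, Sg g 0;
  gr_sub  : forall g x y, Sg g x -> Sg g y -> Sg g (x - y);
  gr_mul  : forall g h x y, Sg g x -> Sg h y -> Sg (mul g h) (x * y);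
  gr_span : forall s : S, exists l : seq (G * S),
      List.NoDup (map fst l) /\ (forall p, List.In p l -> Sg p.1 p.2) /\
      s = \sum_(p <- l) p.2;
  gr_indep : forall l : seq (G * S),
      List.NoDup (map fst l) -> (forall p, List.In p l -> Sg p.1 p.2) ->
      \sum_(p <- l) p.2 = 0 -> forall p, List.In p l -> p.2 = 0 }.

Definition prod2 (A B : S -> Prop) (s : S) : Prop :=
  exists l : seq (S * S), (forall p, List.In p l -> A p.1 /\ B p.2) /\
    s = \sum_(p <- l) p.1 * p.2.

Definition prod3 (A B C : S -> Prop) (s : S) : Prop :=
  exists l : seq (S * S * S),
    (forall p, List.In p l -> [/\ A p.1.1, B p.1.2 & C p.2]) /\
    s = \sum_(p <- l) p.1.1 * p.1.2 * p.2.

Definition epsilon_strongly_graded (mul : G -> G -> G) (inv : G -> G)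
    (Sg : G -> S -> Prop) : Prop :=
  is_graded mul Sg /\
  (forall g s, prod3 (Sg g) (Sg (inv g)) (Sg g) s <-> Sg g s) /\
  (forall g, exists eps, prod2 (Sg g) (Sg (inv g)) eps /\
     forall x, prod2 (Sg g) (Sg (inv g)) x -> eps * x = x /\ x * eps = x).

Definition finite_support (Sg : G -> S -> Prop) : Prop :=
  exists l : list G, forall g, (exists x, Sg g x /\ x <> 0) -> List.In g l.

End Graded.

Section Artinian.
Variable S : nzRingType.

Definition left_ideal_in (A J : S -> Prop) : Prop :=
  (forall x, J x -> A x) /\ J 0 /\ (forall x y, J x -> J y -> J (x - y)) /\
  (forall r x, A r -> J x -> J (r * x)).

Definition right_ideal_in (A J : S -> Prop) : Prop :=
  (forall x, J x -> A x) /\ J 0 /\ (forall x y, J x -> J y -> J (x - y)) /\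
  (forall r x, A r -> J x -> J (x * r)).

Definition left_artinian_in (A : S -> Prop) : Prop :=
  forall I : nat -> S -> Prop, (forall n, left_ideal_in A (I n)) ->
    (forall n x, I n.+1 x -> I n x) ->
    exists N, forall n, (N <= n)%N -> forall x, I n x <-> I N x.

Definition right_artinian_in (A : S -> Prop) : Prop :=
  forall I : nat -> S -> Prop, (forall n, right_ideal_in A (I n)) ->
    (forall n x, I n.+1 x -> I n x) ->
    exists N, forall n, (N <= n)%N -> forall x, I n x <-> I N x.

Definition left_artinian : Prop := left_artinian_in (fun _ => True).
Definition right_artinian : Prop := right_artinian_in (fun _ => True).
End Artinian.

(* Main.v *)
Require Import Defs.
From mathcomp Require Import all_boot all_algebra.
From Stdlib Require List.
Set Implicit Arguments. Unset Strict Implicit. Unset Printing Implicit Defensive.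
Import GRing.Theory.
Local Open Scope ring_scope.

Section Gen.
Variable T : nzRingType.
Variable A : T -> Prop.
Hypothesis A0 : A 0.
Hypothesis Asub : forall x y, A x -> A y -> A (x - y).
Hypothesis Amul : forall x y, A x -> A y -> A (x * y).

Fixpoint span (vs : seq T) (x : T) : Prop :=
  match vs with
  | [::] => x = 0
  | v :: vs' => exists r y, A r /\ span vs' y /\ x = r * v + y
  end.

Definition submod (M : T -> Prop) := M 0 /\ (forall x y, M x -> M y -> M (x - y))
  /\ (forall a x, A a -> M x -> M (a * x)).

Lemma span0 vs : span vs 0.
Proof.
elim: vs => [|v vs IH] //=; exists 0, 0; split => //; split => //.
by rewrite mul0r addr0.
Qed.

Lemma span_sub vs x y : span vs x -> span vs y -> span vs (x - y).
Proof.
elim: vs x y => [|v vs IH] x y /=; first by move=> -> ->; rewrite subr0.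
move=> [r1 [y1 [A1 [S1 ->]]]] [r2 [y2 [A2 [S2 ->]]]].
exists (r1 - r2), (y1 - y2); split; first exact: Asub.
split; first exact: IH.
by rewrite mulrBl opprD addrACA.
Qed.

Lemma span_add vs x y : span vs x -> span vs y -> span vs (x + y).
Proof.
move=> Sx Sy; have := span_sub Sx (span_sub (span0 vs) Sy).
by rewrite sub0r opprK.
Qed.

Lemma span_mul vs a x : A a -> span vs x -> span vs (a * x).
Proof.
elim: vs x => [|v vs IH] x Aa /=; first by move=> ->; rewrite mulr0.
move=> [r [y [Ar [Sy ->]]]]; exists (a * r), (a * y); split; first exact: Amul.
split; first exact: IH.
by rewrite mulrDr mulrA.
Qed.

Lemma span_cons v vs x : span vs x -> span (v :: vs) x.
Proof. move=> Sx; exists 0, x; split => //; split => //; by rewrite mul0r add0r. Qed.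

Lemma span_catl ws vs x : span vs x -> span (ws ++ vs) x.
Proof. elim: ws => [|w ws IH] //= Sx; exact: span_cons (IH Sx). Qed.

Lemma span_catr ws vs x : span ws x -> span (ws ++ vs) x.
Proof.
elim: ws x => [|w ws IH] x /=; first by move=> ->; exact: span0.
move=> [r [y [Ar [Sy ->]]]]; exists r, y; split => //; split => //; exact: IH.
Qed.

Lemma desc_le (M : nat -> T -> Prop) : (forall n x, M n.+1 x -> M n x) ->
  forall m n x, (m <= n)%N -> M n x -> M m x.
Proof.
move=> D m n x; elim: n => [|n IH].
  by rewrite leqn0 => /eqP ->.
rewrite leq_eqVlt => /orP [/eqP -> //| lt] H.
rewrite ltnS in lt; apply: IH => //; exact: D.
Qed.

Lemma dcc_span vs : left_artinian_in A ->
  forall M : nat -> T -> Prop, (forall n, submod (M n)) ->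
  (forall n x, M n.+1 x -> M n x) -> (forall n x, M n x -> span vs x) ->
  exists N, forall n, (N <= n)%N -> forall x, M n x <-> M N x.
Proof.
move=> art; elim: vs => [|v vs IH] M sM D Sp.
  exists 0%N => n _ x; split => H.
    by have /= -> := Sp _ _ H; case: (sM 0%N).
  by have /= -> := Sp _ _ H; case: (sM n).
pose M' n x := M n x /\ span vs x.
have [N1 H1] : exists N, forall n, (N <= n)%N -> forall x, M' n x <-> M' N x.
  apply: IH.
  - move=> n; split; first by split; [case: (sM n) | exact: span0].
    split.
      move=> x y [Mx Sx] [My Sy]; split; last exact: span_sub.
      by case: (sM n) => _ [Hs _]; apply: Hs.
    move=> a x Aa [Mx Sx]; split; last exact: span_mul.
    by case: (sM n) => _ [_ Hm]; apply: Hm.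
  - by move=> n x [Mx Sx]; split => //; apply: D.
  - by move=> n x [].
pose J n r := A r /\ exists y, span vs y /\ M n (r * v + y).
have [N2 H2] : exists N, forall n, (N <= n)%N -> forall x, J n x <-> J N x.
  apply: art.
  - move=> n; split; first by move=> x [].
    split.
      split => //; exists 0; split; first exact: span0.
      by rewrite mul0r addr0; case: (sM n).
    split.
      move=> x y [Ax [y1 [S1 M1]]] [Ay [y2 [S2 M2]]]; split; first exact: Asub.
      exists (y1 - y2); split; first exact: span_sub.
      case: (sM n) => _ [Hs _]; have := Hs _ _ M1 M2.
      by rewrite mulrBl opprD addrACA.
    move=> a x Aa [Ax [y [Sy My]]]; split; first exact: Amul.
    exists (a * y); split; first exact: span_mul.
    case: (sM n) => _ [_ Hm]; have := Hm _ _ Aa My.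
    by rewrite mulrDr mulrA.
  - move=> n x [Ax [y [Sy My]]]; split => //; exists y; split => //; exact: D.
exists (maxn N1 N2) => n le x.
have le1 : (N1 <= n)%N by apply: leq_trans le; exact: leq_maxl.
have le2 : (N2 <= n)%N by apply: leq_trans le; exact: leq_maxr.
split; first exact: desc_le.
move=> Hx; have := Sp _ _ Hx => /= [[r [y [Ar [sy Ex]]]]]; subst x.
have JN : J (maxn N1 N2) r by split => //; exists y.
have Jn : J n r by apply/(H2 n le2 r)/(H2 _ (leq_maxr N1 N2) r).
case: Jn => _ [y' [sy' My']].
have MN' : M (maxn N1 N2) (r * v + y') by apply: (desc_le D le).
have MND : M' (maxn N1 N2) (y - y').
  split; last exact: span_sub.
  case: (sM (maxn N1 N2)) => _ [Hs _]; have := Hs _ _ Hx MN'.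
  by rewrite opprD addrACA subrr add0r.
have [Mnd _] : M' n (y - y') by apply/(H1 n le1)/(H1 _ (leq_maxl N1 N2)).
case: (sM n) => M0 [Hs _].
have -> : r * v + y = (r * v + y') - (0 - (y - y')).
  by rewrite sub0r opprK -addrA [y' + _]addrC addrNK.
by apply: (Hs) => //; apply: (Hs).
Qed.

Lemma left_art_of_span vs : left_artinian_in A -> (forall x, span vs x) ->
  left_artinian T.
Proof.
move=> art all I hI D.
apply: (dcc_span art) => //.
move=> n; case: (hI n) => _ [I0 [Is Im]]; split => //; split => //.
by move=> a x _; apply: Im.
Qed.

Lemma span_sum (G : Type) vs (P : seq (G * T)) :
  (forall p, List.In p P -> p.2 = 0 \/ span vs p.2) -> span vs (\sum_(p <- P) p.2).
Proof.
elim: P => [|p P IH] H; first by rewrite big_nil; exact: span0.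
rewrite big_cons; apply: span_add.
  by case: (H p (or_introl erefl)) => [->|//]; exact: span0.
by apply: IH => q Hq; apply: H; right.
Qed.

End Gen.

Lemma sum_ext (S : nzRingType) (I : Type) (l : seq I) (F1 F2 : I -> S) :
  (forall p, List.In p l -> F1 p = F2 p) ->
  \sum_(p <- l) F1 p = \sum_(p <- l) F2 p.
Proof.
elim: l => [|p l IH] H; first by rewrite !big_nil.
rewrite !big_cons H; last by left.
by rewrite IH // => q Hq; apply: H; right.
Qed.

Theorem proposition3p9 (G : Type) (mul : G -> G -> G) (e : G) (inv : G -> G)
  (S : nzRingType) (Sg : G -> S -> Prop) :
  is_group mul e inv ->
  epsilon_strongly_graded mul inv Sg ->
  finite_support Sg ->
  (left_artinian_in (Sg e) -> left_artinian S) /\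
  (right_artinian_in (Sg e) -> right_artinian S).
Proof.
move=> grp [gr [e3 e2]] [l supp].
have invinv : forall g, inv (inv g) = g.
  move=> g; rewrite -[inv (inv g)](grp_unitr grp) -(grp_invl grp g).
  by rewrite (grp_assoc grp) (grp_invl grp) (grp_unitl grp).
have A0 : Sg e 0 by apply: (gr_zero gr).
have Asub : forall x y, Sg e x -> Sg e y -> Sg e (x - y) by apply: (gr_sub gr).
have Amul : forall x y, Sg e x -> Sg e y -> Sg e (x * y).
  by move=> x y Hx Hy; rewrite -(grp_unitl grp e); apply: (gr_mul gr).
have rid : forall g, exists lg : seq (S * S),
    (forall p, List.In p lg -> Sg (inv g) p.1 /\ Sg g p.2) /\
    forall x, Sg g x -> x = \sum_(p <- lg) (x * p.1) * p.2.
  move=> g; have [eps [[lg [Hl Heps]] Hid]] := e2 (inv g).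
  exists lg; split; first by move=> p /Hl; rewrite invinv.
  move=> x Hx.
  under eq_bigr do rewrite -mulrA; rewrite -big_distrr /= -Heps.
  have [l3 [H3 ->]] := (e3 g x).2 Hx.
  rewrite big_distrl /=; apply: sum_ext => p Hp.
  have [a b c] := H3 p Hp.
  have P2 : prod2 (Sg (inv g)) (Sg (inv (inv g))) (p.1.2 * p.2).
    by exists [:: (p.1.2, p.2)]; split; [move=> q [<-|//]; rewrite invinv | rewrite big_seq1].
  by rewrite -!mulrA [p.1.2 * (p.2 * eps)]mulrA (Hid _ P2).2.
have lid : forall g, exists lg : seq (S * S),
    (forall p, List.In p lg -> Sg g p.1 /\ Sg (inv g) p.2) /\
    forall x, Sg g x -> x = \sum_(p <- lg) p.1 * (p.2 * x).
  move=> g; have [eps [[lg [Hl Heps]] Hid]] := e2 g.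
  exists lg; split => //.
  move=> x Hx.
  under eq_bigr do rewrite mulrA; rewrite -big_distrl /= -Heps.
  have [l3 [H3 ->]] := (e3 g x).2 Hx.
  rewrite big_distrr /=; apply: sum_ext => p Hp.
  have [a b c] := H3 p Hp.
  have P2 : prod2 (Sg g) (Sg (inv g)) (p.1.1 * p.1.2).
    by exists [:: (p.1.1, p.1.2)]; split; [move=> q [<-|//] | rewrite big_seq1].
  by rewrite mulrA (Hid _ P2).1.
have spanS : forall (T : nzRingType) (mulT : G -> G -> G) (SgT : G -> T -> Prop) vs,
    is_graded mulT SgT -> SgT e 0 -> (forall x y, SgT e x -> SgT e y -> SgT e (x - y)) ->
    (forall g, (exists x, SgT g x /\ x <> 0) -> List.In g l) ->
    (forall g, List.In g l -> forall x, SgT g x -> span (SgT e) vs x) ->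
    forall x, span (SgT e) vs x.
  move=> T mulT SgT vs grT B0 Bsub suppT Hvs x.
  have [lc [_ [Hc ->]]] := gr_span grT x.
  apply: span_sum => // p Hp; case: (eqVneq p.2 0) => [->|nz]; [by left|right].
  apply: (Hvs _ _ _ (Hc p Hp)); apply: suppT; exists p.2; split; [exact: (Hc p Hp) | exact/eqP].
split.
- move=> art.
  have [vs Hvs] : exists vs, forall g, List.In g l -> forall x, Sg g x ->
      span (Sg e) vs x.
    elim: l {supp spanS} => [|g l' [vs IH]]; first by exists [::].
    have [lg [Hl Hx]] := rid g.
    exists ([seq p.2 | p <- lg] ++ vs) => h [<-|Hh] x Sx; last first.
      by apply: span_catl => //; apply: (IH _ Hh _ Sx).
    apply: span_catr => //; rewrite (Hx x Sx); clear Hx.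
    elim: lg Hl => [|p lg IHl] Hl; first by rewrite big_nil.
    rewrite big_cons /=; exists (x * p.1), (\sum_(q <- lg) x * q.1 * q.2).
    split.
      have [h1 _] := Hl p (or_introl erefl).
      by rewrite -(grp_invr grp g); apply: (gr_mul gr).
    split => //; apply: IHl => q Hq; apply: Hl; right; exact: Hq.
  apply: (left_art_of_span A0 Asub Amul art).
  exact: (spanS _ _ Sg vs gr A0 Asub supp Hvs).
- move=> art.
  have grc : is_graded (fun g h => mul h g) (Sg : G -> S^c -> Prop).
    case: gr => g0 gs gm gsp gi; split => //.
    move=> g h x y Hx Hy; exact: gm.
  have Amulc : forall x y : S^c, Sg e x -> Sg e y -> Sg e (x * y).
    by move=> x y Hx Hy; exact: Amul Hy Hx.
  have [vs Hvs] : exists vs : seq S^c, forall g, List.In g l -> forall x, Sg g x ->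
      span (Sg e : S^c -> Prop) vs x.
    elim: l {supp spanS} => [|g l' [vs IH]]; first by exists [::].
    have [lg [Hl Hx]] := lid g.
    exists ([seq p.1 | p <- lg] ++ vs) => h [<-|Hh] x Sx; last first.
      by apply: span_catl => //; apply: (IH _ Hh _ Sx).
    apply: span_catr => //; rewrite (Hx x Sx); clear Hx.
    elim: lg Hl => [|p lg IHl] Hl; first by rewrite big_nil.
    rewrite big_cons /=; exists ((p.2 * x : S) : S^c), (\sum_(q <- lg) q.1 * (q.2 * x)).
    split.
      have [_ h2] := Hl p (or_introl erefl).
      by rewrite -(grp_invl grp g); apply: (gr_mul gr).
    split; last reflexivity.
    apply: IHl => q Hq; apply: Hl; right; exact: Hq.
  have : left_artinian S^c.
    apply: (left_art_of_span (A := (Sg e : S^c -> Prop)) (vs := vs) A0 Asub Amulc art).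
    exact: (spanS (S^c) _ Sg vs grc A0 Asub supp Hvs).
  by [].
Qed.
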